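(* Let $m,p,n$ be positive integers with $p\mid m$. Any two distinct $p$-connected elements of $G(m,p,n)$ are incomparable in the codimension order.
   Context: $\zeta_m=e^{2\pi i/m}$. $G(m,1,n)$ is the group of $n\times n$ monomial matrices whose nonzero entries are $m$-th roots of unity, acting on $V=\mathbb{C}^n$; for $p\mid m$, $G(m,p,n)$ is the subgroup of those elements whose nonzero entries multiply to an $(m/p)$-th root of unity. $\operatorname{codim}(g)=n-\dim\{v\in V:gv=v\}$, and the codimension order is $a\le_\perp c$ iff $\operatorname{codim}(a)+\operatorname{codim}(a^{-1}c)=\operatorname{codim}(c)$. A diagonal matrix $g\ne 1$ in $G(m,1,n)$ whose non-1 eigenvalues (with multiplicity) are $\zeta_m^{c_1},\dots,\zeta_m^{c_k}$ is called $p$-connected if $p$ divides $c_1+\dots+c_k$ but $p$ does not divide $\sum_{i\in I}c_i$ for any nonempty proper subset $I\subsetneq\{1,\dots,k\}$ (the exponents are defined mod $m$, and $p\mid m$, so this is well defined). *)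

(* Defs.v *)
From mathcomp Require Import all_boot all_order all_algebra all_field.
Set Implicit Arguments. Unset Strict Implicit. Unset Printing Implicit Defensive.
Import Order.TTheory GRing.Theory Num.Theory.
Local Open Scope ring_scope.

(* zeta_m = e^{2 pi i/m}: in algC, m.-root (-1) is the 2m-th root of unity with
   minimal nonnegative argument, i.e. e^{i pi/m}; its square is e^{2 pi i/m}. *)
Definition zeta (m : nat) : algC := (m.-root (-1)) ^+ 2.

Definition monomial n (A : 'M[algC]_n) : Prop :=
  (forall i, #|[set j | A i j != 0]| = 1%N) /\
  (forall j, #|[set i | A i j != 0]| = 1%N).

Definition inG1 (m n : nat) (A : 'M[algC]_n) : Prop :=
  monomial A /\ (forall i j, A i j != 0 -> A i j ^+ m = 1).

Definition nzprod n (A : 'M[algC]_n) : algC :=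
  \prod_(i < n) \prod_(j < n | A i j != 0) A i j.

Definition inG (m p n : nat) (A : 'M[algC]_n) : Prop :=
  inG1 m A /\ nzprod A ^+ (m %/ p) = 1.

(* fixed space {v in C^n : g v = v} (column vectors v, encoded as rows v^T
   with v^T g^T = v^T) and codimension *)
Definition fixspace n (g : 'M[algC]_n) : 'M[algC]_n := kermx (g^T - 1%:M).
Definition codim n (g : 'M[algC]_n) : nat := (n - \rank (fixspace g))%N.

Definition codim_le n (a c : 'M[algC]_n) : Prop :=
  (codim a + codim (invmx a *m c))%N = codim c.

Definition p_connected (m p n : nat) (g : 'M[algC]_n) : Prop :=
  inG1 m g /\ is_diag_mx g /\ g <> 1%:M /\
  exists c : 'I_n -> nat,
    (forall i, g i i = zeta m ^+ c i) /\
    let S := [set i | g i i != 1] in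
    (p %| \sum_(i in S) c i)%N /\
    (forall I : {set 'I_n}, I \proper S -> I != set0 ->
        ~~ (p %| \sum_(i in I) c i)%N).

(* Main.v *)
Require Import Defs.
From mathcomp Require Import all_boot all_order all_algebra all_field.
From mathcomp Require Import ring lra zify.
Import Order.TTheory GRing.Theory Num.Theory.
Local Open Scope ring_scope.

Lemma trig1 (R : realFieldType) (a b c d : R) : a^+2+b^+2 = 1 -> c^+2+d^+2 = 1 -> 0<=b -> 0<=d -> a <= c -> c != 1 ->
  0 <= b*c - a*d /\ a < a*c + b*d.
Proof.
move=> h1 h2 hb hd hac hc1.
have hc : c < 1 by rewrite lt_neqAle hc1 /=; nra.
split.
- have [c0|c0] := lerP 0 c; have [a0|a0] := lerP 0 a.
  + have hbd : d <= b by nra.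
    nra.
  + nra.
  + nra.
  + have hbd : b <= d by nra.
    nra.
- have [a0|a0] := lerP a 0.
  + have [a00|a00] := ltrP a 0.
    * nra.
    * have : a = 0 by lra. move=> a00'. subst a. have hb1 : b = 1 by nra. have hd2 : 0 < d^+2 by nra. have hd0 : 0 < d by nra. nra.
  + have hbd : d <= b by nra.
    nra.
Qed.

Definition ReR (x : algC) : algR := in_algR (Creal_Re x).
Definition ImR (x : algC) : algR := in_algR (Creal_Im x).

Lemma vinj : injective algRval. Proof. exact: val_inj. Qed.
Lemma leR (x y : algR) : (x <= y) = (algRval x <= algRval y). Proof. by []. Qed.
Lemma ltR (x y : algR) : (x < y) = (algRval x < algRval y). Proof. rewrite !lt_def. by []. Qed.

Lemma trigC (x g : algC) : `|x| = 1 -> `|g| = 1 -> 0 <= 'Im x -> 0 <= 'Im g ->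
  'Re x <= 'Re g -> g != 1 -> 0 <= 'Im (x * g^*) /\ 'Re x < 'Re (x * g^*).
Proof.
move=> nx ng hx hg hxg g1.
have e1 : ReR x ^+ 2 + ImR x ^+ 2 = 1.
  by apply: vinj; rewrite rmorphD !rmorphXn /= -normC2_Re_Im nx expr1n.
have e2 : ReR g ^+ 2 + ImR g ^+ 2 = 1.
  by apply: vinj; rewrite rmorphD !rmorphXn /= -normC2_Re_Im ng expr1n.
have c1 : ReR g != 1.
  apply/eqP => /(congr1 algRval); rewrite rmorph1 => hr; have {}hr : 'Re g = 1 := hr.
  move: e2 => /(congr1 algRval); rewrite rmorphD !rmorphXn rmorph1 /= hr expr1n => /eqP.
  rewrite -subr_eq0 addrAC subrr add0r sqrf_eq0 => /eqP hi.
  by move/eqP: g1; apply; rewrite [g]Crect hr hi mulr0 addr0.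
have := @trig1 _ _ _ _ _ e1 e2 hx hg hxg c1.
rewrite leR ltR => -[h1 h2]; split.
  by rewrite ImM Im_conj Re_conj; move: h1; rewrite rmorph0 rmorphB !rmorphM /=; congr (_ <= _); ring.
by rewrite ReM Im_conj Re_conj; move: h2; rewrite rmorphD !rmorphM /=; congr (_ < _); ring.
Qed.

Lemma root_norm1 N (x : algC) : (0<N)%N -> x ^+ N = 1 -> `|x| = 1.
Proof. by move=> N0 h; apply/eqP; rewrite -(@pexpr_eq1 _ _ N N0) ?normr_ge0 // -normrX h normr1. Qed.

Lemma N1neq1 : (-1 : algC) != 1.
Proof. by rewrite lt_eqF // (lt_trans (@ltrN10 _) (@ltr01 _)). Qed.

Lemma ImN1 : 'Im (-1 : algC) = 0.
Proof. by apply/Creal_ImP; rewrite rpredN1. Qed.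

Lemma half_root N (x : algC) n : N = n.*2 -> (0 < n)%N -> N.-primitive_root x -> x ^+ n = -1.
Proof.
move=> eN n0 px.
have : (x ^+ n) ^+ 2 == 1 by rewrite -exprM muln2 -eN prim_expr_order.
rewrite sqrf_eq1 => /orP[/eqP h|/eqP //].
move: (prim_order_dvd px n); rewrite h eqxx => /dvdn_leq; rewrite n0 eN => /(_ isT). lia.
Qed.

Lemma zeta_prim n : (0 < n)%N -> n.-primitive_root (zeta n).
Proof.
move=> n0.
pose N := n.*2.
have N0 : (0 < N)%N by rewrite /N double_gt0.
have [u pu] := C_prim_root_exists N0.
have un : u ^+ n = -1 by apply: half_root pu.
pose P := [pred k : 'I_N | (u ^+ k != 1) && (0 <= 'Im (u ^+ k))].
have nN : (n < N)%N by rewrite /N; lia.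
pose i0 : 'I_N := Ordinal nN.
have Pi0 : P i0 by rewrite /P /= un N1neq1 ImN1 lexx.
pose f (k : 'I_N) := ReR (u ^+ k).
case: (arg_maxP f Pi0) => kg /andP[g1 gI] kmax.
set g := u ^+ kg in g1 gI.
have gN : g ^+ N = 1 by rewrite /g -exprM mulnC exprM (prim_expr_order pu) expr1n.
pose F (x : algC) := #|[set k : 'I_N | 'Re x < 'Re (u ^+ k)]|.
have key : forall r x, (F x < r)%N -> x ^+ N = 1 -> 0 <= 'Im x -> exists k, x = g ^+ k.
  elim=> [//|r IH] x Fx xN xI.
  have [->|x1] := eqVneq x 1; first by exists 0%N.
  have [kx ex] := prim_rootP pu xN.
  have hxg : 'Re x <= 'Re g.
    have := kmax kx; rewrite /P /= -ex x1 xI => /(_ isT).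
    by move=> h; rewrite ex; exact: h.
  have [hI hR] := trigC _ _ (root_norm1 _ _ N0 xN) (root_norm1 _ _ N0 gN) xI gI hxg g1.
  set y := x * g^*.
  have yN : y ^+ N = 1 by rewrite exprMn -rmorphXn gN rmorph1 xN mulr1.
  have Fy : (F y < F x)%N.
    have [ky eky] := prim_rootP pu yN.
    apply: proper_card; apply/properP; split.
      by apply/subsetP => k; rewrite !inE => /(lt_trans hR).
    by exists ky; rewrite !inE -eky ?hR ?ltxx.
  rewrite ltnS in Fx.
  have [k ek] := IH y (leq_trans Fy Fx) yN hI.
  exists k.+1; rewrite exprSr -ek /y -mulrA.
  by rewrite mulrC -normCKC (root_norm1 _ _ N0 gN) expr1n mul1r.
have key' x : x ^+ N = 1 -> 0 <= 'Im x -> exists k, x = g ^+ k.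
  exact: key (F x).+1 x (ltnSn _).
pose v := if 0 <= 'Im u then u else u^*.
have pv : N.-primitive_root v.
  by rewrite /v; case: ifP => _ //; rewrite fmorph_primitive_root.
have vI : 0 <= 'Im v.
  rewrite /v; case: ifPn => // hu; rewrite Im_conj oppr_ge0.
  by rewrite ltW // real_ltNge ?hu ?Creal_Im ?real0.
have [k ek] := key' v (prim_expr_order pv) vI.
have [d pd dN] := prim_order_exists N0 gN.
have Nd : (N %| d)%N.
  by rewrite (prim_order_dvd pv) ek -exprM mulnC exprM (prim_expr_order pd) expr1n.
have edN : d = N by apply/eqP; rewrite eqn_dvd dN Nd.
rewrite edN in pd.
have gn : g ^+ n = -1 by apply: half_root pd.
pose w : algC := n.-root (-1).
have wn : w ^+ n = -1 by rewrite /w rootCK.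
have wN : w ^+ N = 1 by rewrite /N -muln2 exprM wn sqrrN expr1n.
have wI : 0 <= 'Im w.
  rewrite /w; case: (ltnP 1 n) => [n1|n1]; first exact: Im_rootC_ge0.
  have -> : n = 1%N by lia.
  by rewrite root1C ImN1.
have w1 : w != 1 by apply: contra_neq N1neq1 => h; rewrite -wn h expr1n.
have h1 : 'Re g <= 'Re w by apply: rootC_Re_max.
have h2 : 'Re w <= 'Re g.
  have [kw ekw] := prim_rootP pu wN.
  have := kmax kw; rewrite /P /= -ekw w1 wI => /(_ isT).
  by move=> h; rewrite ekw; exact: h.
have ewg : w = g.
  apply: eqC_semipolar; first by rewrite (root_norm1 _ _ N0 wN) (root_norm1 _ _ N0 gN).
    by apply/le_anti; rewrite h1 h2.
  exact: mulr_ge0.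
have -> : zeta n = g ^+ (N %/ n) by rewrite /zeta -/w ewg /N -muln2 mulKn.
by apply: (dvdn_prim_root pd); rewrite /N -muln2 dvdn_mulr.
Qed.

Lemma rank_diag (F : fieldType) n (d : 'rV[F]_n) :
  \rank (diag_mx d) = #|[set i | d 0 i != 0]|.
Proof.
set S := [set i | d 0 i != 0].
pose f (j : 'I_#|S|) := enum_val j.
pose Bm := rowsub f (diag_mx d).
pose B : 'M[F]_(n, #|S|) := \matrix_(i, j) ((i == f j)%:R / d 0 i).
have BmB : Bm *m B = 1%:M.
  apply/matrixP => j j'; rewrite !mxE (bigD1 (f j)) //= big1.
    rewrite !mxE eqxx mulr1n addr0 mulrCA divff ?mulr1.
      by rewrite (inj_eq (@enum_val_inj _ _)).
    by have := enum_valP j; rewrite inE.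
  by move=> i ni; rewrite !mxE eq_sym (negPf ni) mulr0n mul0r.
have rBm : \rank Bm = #|S|.
  apply/eqP; rewrite eqn_leq rank_leq_row /=.
  by rewrite -{1}(mxrank1 F #|S|) -BmB mxrankM_maxl.
rewrite -rBm; apply/eqP; rewrite eqn_leq; apply/andP; split; apply: mxrankS.
  apply/row_subP => i.
  have [Si|nSi] := boolP (i \in S).
    by rewrite -(enum_rankK_in Si Si) -/(f _) -row_rowsub row_sub.
  have -> : row i (diag_mx d) = 0.
    by rewrite row_diag_mx; move: nSi; rewrite inE negbK => /eqP ->; rewrite scale0r.
  exact: sub0mx.
by apply/row_subP => j; rewrite row_rowsub row_sub.
Qed.


Lemma codim_diag n (d : 'rV[algC]_n) :
  codim (diag_mx d) = #|[set i | d 0 i != 1]|.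
Proof.
rewrite /codim /fixspace mxrank_ker tr_diag_mx.
have -> : diag_mx d - 1%:M = diag_mx (\row_i (d 0 i - 1)).
  apply/matrixP => i j; rewrite !mxE.
  by case: eqP => _; rewrite ?mulr1n ?mulr0n ?subrr.
rewrite subKn ?rank_leq_col // rank_diag.
by apply: eq_card => i; rewrite !inE !mxE subr_eq0.
Qed.

Lemma diag_of n (a : 'M[algC]_n) : is_diag_mx a -> a = diag_mx (\row_i a i i).
Proof.
move/is_diag_mxP => ad; apply/matrixP => i j; rewrite !mxE.
by case: (altP (i =P j)) => [->|/ad->]; rewrite ?mulr1n ?mulr0n.
Qed.

Lemma not_le (m p n : nat) (a c : 'M[algC]_n) :
  (0 < m)%N -> (p %| m)%N ->
  p_connected m p a -> p_connected m p c -> a <> c -> ~ codim_le a c.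
Proof.
move=> m0 pm [_ [adg [a1 [ca [eca [pSa _]]]]]] [_ [cdg [c1 [cc [ecc [_ pIc]]]]]] ac.
rewrite /codim_le => H.
have pz := @zeta_prim m m0.
have z0 : zeta m != 0 by rewrite (prim_root_eq0 pz) -lt0n.
have a0 i : a i i != 0 by rewrite eca expf_neq0.
pose da := \row_i a i i; pose dc := \row_i c i i.
have ea : a = diag_mx da by apply: diag_of.
have ec : c = diag_mx dc by apply: diag_of.
have au : a \in unitmx.
  rewrite unitmxE ea det_diag unitfE; apply/prodf_neq0 => i _.
  by rewrite mxE.
pose db := \row_i (c i i / a i i).
have eb : invmx a *m c = diag_mx db.
  have : a *m diag_mx db = c.
    rewrite {1}ea mulmx_diag ec; congr diag_mx; apply/rowP => i.
    by rewrite !mxE mulrCA divff ?mulr1.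
  by move=> <-; rewrite mulmxA mulVmx // mul1mx.
set Sa := [set i | a i i != 1]; set Sc := [set i | c i i != 1].
set D := [set i | c i i / a i i != 1].
have cSa : codim a = #|Sa|.
  by rewrite {1}ea codim_diag; apply: eq_card => i; rewrite !inE mxE.
have cSc : codim c = #|Sc|.
  by rewrite {1}ec codim_diag; apply: eq_card => i; rewrite !inE mxE.
have cD : codim (invmx a *m c) = #|D|.
  by rewrite eb codim_diag; apply: eq_card => i; rewrite !inE mxE.
rewrite cSa cD cSc in H.
have nD i : i \notin D -> c i i = a i i.
  by rewrite inE negbK => /eqP /divr1_eq.
have ScU : Sc \subset Sa :|: D.
  apply/subsetP => i iSc; rewrite inE.
  case: (boolP (i \in D)) => iD; rewrite ?iD ?orbT //.
  by rewrite orbF; move: iSc; rewrite !inE (nD i iD).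
have I0 : Sa :&: D = set0.
  apply: cards0_eq; have := subset_leq_card ScU; rewrite cardsU -H.
  have := subset_leq_card (subsetIl Sa D); lia.
have aeq i : i \in Sa -> c i i = a i i.
  move=> iSa; apply: nD; apply/negP => iD.
  have : i \in Sa :&: D by rewrite inE iSa iD.
  by rewrite I0 inE.
have SaSc : Sa \subset Sc.
  by apply/subsetP => i iSa; move: (iSa); rewrite !inE aeq.
have Sa0 : Sa != set0.
  apply/eqP => S0; apply: a1.
  rewrite ea -diag_const_mx; congr diag_mx; apply/rowP => i; rewrite !mxE.
  apply/eqP; apply: contraT => hi.
  have : i \in Sa by rewrite inE.
  by rewrite S0 inE.
have SaP : Sa \proper Sc.
  rewrite properEneq SaSc andbT; apply/eqP => eS.
  have D0 : D = set0 by apply: cards0_eq; move: H; rewrite eS; lia.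
  apply: ac; rewrite ea ec; congr diag_mx; apply/rowP => i; rewrite !mxE.
  by apply/esym/nD; rewrite D0 inE.
have := pIc Sa SaP Sa0; apply/negP; rewrite negbK.
have emod : (\sum_(i in Sa) cc i = \sum_(i in Sa) ca i %[mod m])%N.
  rewrite -modn_summ -[RHS]modn_summ; congr (_ %% _)%N; apply: eq_bigr => i iSa.
  by apply/eqP; rewrite -(eq_prim_root_expr pz) -ecc -eca aeq.
have emodp : (\sum_(i in Sa) cc i = \sum_(i in Sa) ca i %[mod p])%N.
  by rewrite -[LHS](modn_dvdm _ pm) -[RHS](modn_dvdm _ pm) emod.
rewrite /dvdn emodp.
exact: pSa.
Qed.

Theorem mainTheorem5 (m p n : nat) :
  (0 < m)%N -> (0 < p)%N -> (0 < n)%N -> (p %| m)%N ->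
  forall a c : 'M[algC]_n,
    inG m p a -> inG m p c ->
    p_connected m p a -> p_connected m p c -> a <> c ->
    ~ codim_le a c /\ ~ codim_le c a.
Proof.
move=> m0 _ _ pm a c _ _ pa pc ac; split.
  exact: (@not_le _ _ _ _ _ m0 pm pa pc ac).
by apply: (@not_le _ _ _ _ _ m0 pm pc pa) => /esym.
Qed.
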